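(* Let $k \geq 1$ and let $G_0,\dots,G_{k-1}$ be bipartite graphs such that for all $i \neq j$ in $\{0,\dots,k-1\}$, $V(G_i)\cap V(G_j) = \{g\}$ for a single common vertex $g$. Let $G = \bigcup_{i=0}^{k-1} G_i$ (vertex set $\bigcup_i V(G_i)$, edge set $\bigcup_i E(G_i)$). Suppose that for each $i$, $\phi_{G_i}$ is a well-begun $l_i$-encoding of $G_i$. Then $G$ has a well-begun $l$-encoding, where $l = \max_{0\le i\le k-1} l_i + \lceil \log_2 k \rceil$.
   Context: For a graph $G=(V,E)$ and $l\in\mathbb{N}$, an $l$-encoding of $G$ is a function $\phi: V \to \mathbb{N}^l$ such that $\phi$ is injective and for all $u,v \in V$, $\{u,v\}\in E$ if and only if $\phi(u)$ and $\phi(v)$ differ in all $l$ coordinates. An $l$-encoding $\phi$ of $G$ is well-begun if the first coordinate of $\phi(v)$ lies in $\{0,1,\dots,\chi(G)-1\}$ for every vertex $v$, where $\chi(G)$ is the chromatic number of $G$. *)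

(* Defs.v *)
From mathcomp Require Import all_boot.
Set Implicit Arguments. Unset Strict Implicit. Unset Printing Implicit Defensive.

Section Graphs.
Variable T : finType.

Definition simple_graph (V : {set T}) (E : rel T) : Prop :=
  [/\ symmetric E, irreflexive E & forall u v, E u v -> (u \in V) && (v \in V)].

Definition bipartite (V : {set T}) (E : rel T) : Prop :=
  exists f : T -> bool, forall u v, u \in V -> v \in V -> E u v -> f u != f v.

Definition colorableb (V : {set T}) (E : rel T) (n : nat) : bool :=
  [exists c : {ffun T -> 'I_n},
     [forall u, forall v,
        [&& u \in V, v \in V, u != v & E u v] ==> (c u != c v)]].

Lemma colorable_card (V : {set T}) (E : rel T) : exists n, colorableb V E n.
Proof.
exists #|T|; apply/existsP; exists [ffun x => enum_rank x].
apply/forallP => u; apply/forallP => v; apply/implyP => /and4P [_ _ huv _].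
rewrite !ffunE; apply: contra huv => /eqP h; apply/eqP.
exact: enum_rank_inj h.
Qed.

Definition chromatic (V : {set T}) (E : rel T) : nat :=
  ex_minn (colorable_card V E).

Definition encoding (V : {set T}) (E : rel T) (l : nat)
  (phi : T -> l.-tuple nat) : Prop :=
  {in V &, injective phi} /\
  (forall u v, u \in V -> v \in V -> u != v ->
     (E u v <-> forall j : 'I_l, tnth (phi u) j != tnth (phi v) j)).

Definition well_begun_encoding (V : {set T}) (E : rel T) (l : nat)
  (phi : T -> l.-tuple nat) : Prop :=
  encoding V E phi /\
  (forall v, v \in V -> forall j : 'I_l, val j = 0 ->
     tnth (phi v) j < chromatic V E).

Definition unionV (k : nat) (V : 'I_k -> {set T}) : {set T} :=
  \bigcup_(i < k) V i.
Definition unionE (k : nat) (E : 'I_k -> rel T) : rel T :=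
  fun u v => [exists i : 'I_k, E i u v].

End Graphs.

(* Main.v *)
Require Import Defs.
From mathcomp Require Import all_boot.
From mathcomp Require Import zify.
Set Implicit Arguments. Unset Strict Implicit. Unset Printing Implicit Defensive.

Definition swap0 (x a : nat) := if x == a then 0 else if x == 0 then a else x.

Lemma swap0_inj a x y : swap0 x a = swap0 y a -> x = y.
Proof. rewrite /swap0; do !case: eqP; lia. Qed.

Lemma swap0_lt a x n : x < n -> a < n -> swap0 x a < n.
Proof. rewrite /swap0; do !case: eqP => //; lia. Qed.

Lemma swap0_aa a : swap0 a a = 0.
Proof. by rewrite /swap0 eqxx. Qed.

Definition bit (t i : nat) := odd (i %/ 2 ^ t).

Lemma bits_eq m : forall i j, i < 2 ^ m -> j < 2 ^ m ->
  (forall t, t < m -> bit t i = bit t j) -> i = j.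
Proof.
elim: m => [|m IH] i j; first by rewrite expn0; lia.
move=> hi hj hb.
have h0 : odd i = odd j by have := hb 0 isT; rewrite /bit expn0 !divn1.
have h1 : i./2 = j./2.
  apply: IH.
  - by move: hi; rewrite expnS -divn2; lia.
  - by move: hj; rewrite expnS -divn2; lia.
  move=> t ht; have := hb t.+1 ht; by rewrite /bit expnS !divnMA !divn2.
by rewrite -[i]odd_double_half -[j]odd_double_half h0 h1.
Qed.

Lemma bits_ex m i j : i < 2 ^ m -> j < 2 ^ m -> i != j ->
  exists t : 'I_m, bit t i != bit t j.
Proof.
move=> hi hj hij.
case: (boolP [exists t : 'I_m, bit t i != bit t j]) => [/existsP[t ht]|/existsPn h].
  by exists t.
case/eqP: hij; apply: (bits_eq hi hj) => t ht.
by have := h (Ordinal ht); rewrite negbK => /eqP.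
Qed.

Section Chi.
Variable T : finType.

Lemma chromatic_le (V : {set T}) E n : colorableb V E n -> chromatic V E <= n.
Proof. rewrite /chromatic; case: ex_minnP => m _ hmin; exact: hmin. Qed.

Lemma chromatic_spec (V : {set T}) E : colorableb V E (chromatic V E).
Proof. by rewrite /chromatic; case: ex_minnP. Qed.

Lemma chromatic_le2 (V : {set T}) E : bipartite V E -> chromatic V E <= 2.
Proof.
case=> f hf; apply: chromatic_le; apply/existsP.
exists [ffun x => inord (f x) : 'I_2].
apply/forallP => u; apply/forallP => v; apply/implyP => /and4P [hu hv _ he].
rewrite !ffunE; apply: contra (hf _ _ hu hv he) => /eqP /(congr1 val) /=.
by rewrite !inordK //; case: (f u); case: (f v).
Qed.

Lemma chromatic_mono (V V' : {set T}) (E E' : rel T) :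
  V \subset V' -> (forall u v, E u v -> E' u v) -> chromatic V E <= chromatic V' E'.
Proof.
move=> hV hE; apply: chromatic_le.
have /existsP [c hc] := chromatic_spec V' E'.
apply/existsP; exists c; apply/forallP => u; apply/forallP => v; apply/implyP.
move=> /and4P [hu hv huv he].
have := forallP (forallP hc u) v; move/implyP; apply.
by rewrite (subsetP hV _ hu) (subsetP hV _ hv) huv hE.
Qed.

Lemma chromatic_gt0 (V : {set T}) E (u : T) : 0 < chromatic V E.
Proof.
have /existsP [c _] := chromatic_spec V E.
by move: (c u); case: (chromatic V E) => // [[]].
Qed.
End Chi.

Section Main.
Variables (T : finType) (k : nat) (hk : 0 < k) (V : 'I_k -> {set T})
  (E : 'I_k -> rel T) (l : 'I_k -> nat)
  (phi : forall i : 'I_k, T -> (l i).-tuple nat) (g : T).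
Hypothesis hs : forall i, simple_graph (V i) (E i).
Hypothesis hb : forall i, bipartite (V i) (E i).
Hypothesis hg : forall i j : 'I_k, i != j -> V i :&: V j = [set g].
Hypothesis hw : forall i, well_begun_encoding (V i) (E i) (phi i).

Local Notation L := (\max_(i < k) l i).
Local Notation m := (up_log 2 k).
Local Notation chiU := (chromatic (unionV V) (unionE E)).

Definition i0 : 'I_k := Ordinal hk.
Definition idx (u : T) : 'I_k := odflt i0 [pick i | u \in V i].
Definition aa (i : 'I_k) c := if g \in V i then nth 0 (phi i g) c else 0.
Definition ww (i : 'I_k) u :=
  if 0 < l i then swap0 (nth 0 (phi i u) 0) (aa i 0) else 0.
Definition mn (i : 'I_k) u c :=
  if c < l i then swap0 (nth 0 (phi i u) c) (aa i c) else ww i u.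
Definition ex (i : 'I_k) u t : nat :=
  if u == g then 2 else (bit t i == (ww i u == 1)).
Definition Psi (i : 'I_k) u : (L + m).-tuple nat :=
  [tuple (if j < L then mn i u j else ex i u (j - L)) | j < L + m].
Definition psi u := Psi (idx u) u.

Lemma in_cap i j u : i != j -> u \in V i -> u \in V j -> u = g.
Proof.
move=> ij hi hj; have : u \in V i :&: V j by rewrite inE hi hj.
by rewrite hg // inE => /eqP.
Qed.

Lemma g_in i j : i != j -> g \in V i.
Proof. move=> ij; have : g \in V i :&: V j by rewrite hg // inE. by rewrite inE => /andP[]. Qed.

Lemma idx_eq i u : u \in V i -> u != g -> idx u = i.
Proof.
move=> hu ug; rewrite /idx; case: pickP => [j hj|h] /=.
  by case: (eqVneq j i) => // ji; case/eqP: ug; apply: (in_cap ji).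
by have := h i; rewrite hu.
Qed.

Lemma mn_g i c : g \in V i -> mn i g c = 0.
Proof. by move=> hgi; rewrite /mn /ww /aa hgi !swap0_aa; do !case: ifP. Qed.

Lemma psi_V i u : u \in V i -> psi u = Psi i u.
Proof.
move=> hu; rewrite /psi; case: (eqVneq u g) => [eug|ug]; last by rewrite (idx_eq hu).
subst u; have hg' : g \in V (idx g).
  by rewrite /idx; case: pickP => [j hj|h] //=; have := h i; rewrite hu.
apply: eq_from_tnth => j; rewrite !tnth_mktuple /ex eqxx !mn_g //.
Qed.

Lemma l_zero i u v : l i = 0 -> u \in V i -> v \in V i -> u = v.
Proof.
move=> hl hu hv; apply: ((hw i).1.1 u v hu hv); apply: eq_from_tnth => j.
by have := ltn_ord j; rewrite [X in _ < X]hl.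
Qed.

Lemma chi_i_U i : chromatic (V i) (E i) <= chiU.
Proof.
apply: chromatic_mono; first by apply: (bigcup_sup i).
by move=> u v h; apply/existsP; exists i.
Qed.

Lemma ww_lt_chi i u : u \in V i -> ww i u < chromatic (V i) (E i).
Proof.
move=> hu; rewrite /ww; case: ifP => hl; last exact: chromatic_gt0 u.
have h0 : forall x, x \in V i -> nth 0 (phi i x) 0 < chromatic (V i) (E i).
  move=> x hx; have := (hw i).2 x hx (Ordinal hl) erefl.
  by rewrite (tnth_nth 0).
apply: swap0_lt; first exact: h0.
rewrite /aa; case: ifP => hgi; [exact: h0|exact: chromatic_gt0 u].
Qed.

Lemma ww_lt i u : u \in V i -> ww i u < 2.
Proof. by move=> hu; apply: leq_trans (ww_lt_chi hu) (chromatic_le2 (hb i)). Qed.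

Lemma intra_edge i u v : u \in V i -> v \in V i -> u != v ->
  (unionE E u v <-> E i u v).
Proof.
move=> hu hv uv; split; last by move=> h; apply/existsP; exists i.
case/existsP => h he; case: (eqVneq h i) => [eq|hi]; first by rewrite -eq.
have [_ _ hV] := hs h; case/andP: (hV _ _ he) => hu' hv'.
by case/eqP: uv; rewrite (in_cap hi hu' hu) (in_cap hi hv' hv).
Qed.

Lemma ww_neq i u v : u \in V i -> v \in V i -> u != v -> E i u v -> ww i u != ww i v.
Proof.
move=> hu hv uv he; have enc := (hw i).1.2 u v hu hv uv.
case: (posnP (l i)) => hl; first by case/eqP: uv; exact: l_zero hl hu hv.
rewrite /ww hl; apply: contra (enc.1 he (Ordinal hl)) => /eqP /swap0_inj.
by rewrite !(tnth_nth 0) /= => ->.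
Qed.

Lemma l_le i : l i <= L.
Proof. exact: leq_bigmax. Qed.

Lemma intra_enc i u v : u \in V i -> v \in V i -> u != v ->
  (E i u v <-> forall j, tnth (Psi i u) j != tnth (Psi i v) j).
Proof.
move=> hu hv uv; have enc := (hw i).1.2 u v hu hv uv; split.
  move=> he j; rewrite !tnth_mktuple; case: ifP => jL.
    rewrite /mn; case: ifP => jl; last exact: ww_neq.
    apply: contra (enc.1 he (Ordinal jl)) => /eqP /swap0_inj.
    by rewrite !(tnth_nth 0) /= => ->.
  rewrite /ex; case: (eqVneq u g) => [eu|ug]; case: (eqVneq v g) => [ev|vg].
  - by case/eqP: uv; rewrite eu ev.
  - by case: (bit (j - L) i == _).
  - by case: (bit (j - L) i == _).
  move: (ww_lt hu) (ww_lt hv) (ww_neq hu hv uv he).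
  by case: (ww i u) => [|[|?]] //; case: (ww i v) => [|[|?]] //; case: bit.
move=> h; apply/enc => j.
have jL : j < L + m by apply: leq_trans (ltn_ord j) _; apply: leq_trans (l_le i) (leq_addr _ _).
have := h (Ordinal jL); rewrite !tnth_mktuple /=.
have -> : j < L by apply: leq_trans (ltn_ord j) (l_le i).
rewrite /mn ltn_ord; apply: contra; rewrite !(tnth_nth 0) => /eqP -> //.
Qed.

Lemma intra_inj i u v : u \in V i -> v \in V i -> Psi i u = Psi i v -> u = v.
Proof.
move=> hu hv h; apply: ((hw i).1.1 u v hu hv); apply: eq_from_tnth => j.
have jL : j < L + m by apply: leq_trans (ltn_ord j) _; apply: leq_trans (l_le i) (leq_addr _ _).
have := congr1 (fun t => tnth t (Ordinal jL)) h; rewrite /= !tnth_mktuple /=.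
have -> : j < L by apply: leq_trans (ltn_ord j) (l_le i).
by rewrite /mn ltn_ord => /swap0_inj; rewrite !(tnth_nth 0).
Qed.

Lemma cross i j u v : i != j -> u \in V i -> v \in V j -> u != g -> v != g ->
  (exists o, tnth (Psi i u) o = tnth (Psi j v) o) /\ Psi i u != Psi j v.
Proof.
move=> ij hu hv ug vg.
have hli : 0 < l i.
  case: (posnP (l i)) => // hl; case/eqP: ug; exact: l_zero hl hu (g_in ij).
have hL : 0 < L by apply: leq_trans hli (l_le i).
have hkm : k <= 2 ^ m by apply: up_logP.
have [t ht] := bits_ex (leq_trans (ltn_ord i) hkm) (leq_trans (ltn_ord j) hkm) ij.
have o0L : 0 < L + m by apply: leq_trans hL (leq_addr _ _).
have oTL : L + t < L + m by rewrite ltn_add2l.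
have e0 : forall h x, tnth (Psi h x) (Ordinal o0L) = ww h x.
  by move=> h x; rewrite tnth_mktuple /= hL /mn /ww; by case: (0 < l h).
have eT : forall h x, x != g -> tnth (Psi h x) (Ordinal oTL) = (bit t h == (ww h x == 1)).
  move=> h x xg; rewrite tnth_mktuple /=.
  by rewrite ltnNge leq_addr /= addKn /ex (negbTE xg).
move: (ww_lt hu) (ww_lt hv) => hwu hwv.
case: (eqVneq (ww i u) (ww j v)) => hw'.
  split; first by exists (Ordinal o0L); rewrite !e0.
  apply/eqP => /(congr1 (fun s => tnth s (Ordinal oTL))).
  rewrite (eT i u ug) (eT j v vg) hw'.
  by move: ht; case: bit; case: bit; case: (_ == 1).
split.
  exists (Ordinal oTL); rewrite (eT i u ug) (eT j v vg).
  move: ht hw' hwu hwv; case: (ww i u) => [|[|?]] //; case: (ww j v) => [|[|?]] //;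
  by case: bit; case: bit.
by apply/eqP => /(congr1 (fun s => tnth s (Ordinal o0L))); rewrite !e0; apply/eqP.
Qed.

Lemma classify u v : u \in unionV V -> v \in unionV V ->
  (exists i, u \in V i /\ v \in V i) \/
  (exists i j, [/\ i != j, u \in V i, v \in V j, u != g & v != g]).
Proof.
move=> /bigcupP [i _ hu] /bigcupP [j _ hv].
case: (eqVneq i j) => [eij|ij]; first by left; exists j; subst.
case: (eqVneq u g) => [eu|ug].
  have hgj : g \in V j by apply: (@g_in j i); rewrite eq_sym.
  by left; exists j; rewrite eu.
case: (eqVneq v g) => [ev|vg].
  by left; exists i; rewrite ev (g_in ij).
by right; exists i, j.
Qed.

Lemma main_pos : 0 < L ->
  well_begun_encoding (unionV V) (unionE E) psi.
Proof.
move=> hL; split; [split|].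
- move=> u v hu hv h; case: (classify hu hv) => [[i [hu' hv']]|[i [j [ij hu' hv' ug vg]]]].
    by apply: (intra_inj hu' hv'); rewrite -(psi_V hu') -(psi_V hv').
  have [_ /negP] := cross ij hu' hv' ug vg.
  by rewrite -(psi_V hu') -(psi_V hv') h eqxx.
- move=> u v hu hv uv; case: (classify hu hv) => [[i [hu' hv']]|[i [j [ij hu' hv' ug vg]]]].
    by rewrite (intra_edge hu' hv' uv) (intra_enc hu' hv' uv) (psi_V hu') (psi_V hv').
  have [[o ho] _] := cross ij hu' hv' ug vg.
  split.
    case/existsP => h he; have [_ _ hV] := hs h; case/andP: (hV _ _ he) => hu2 hv2.
    case: (eqVneq h i) => [ehi|hi]; last by case/eqP: ug; exact: in_cap hi hu2 hu'.
    case: (eqVneq h j) => [ehj|hj]; last by case/eqP: vg; exact: in_cap hj hv2 hv'.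
    by case/eqP: ij; rewrite -ehi -ehj.
  by move=> /(_ o); rewrite (psi_V hu') (psi_V hv') ho eqxx.
- move=> v hv j j0; have /bigcupP [i _ hvi] := hv.
  rewrite (psi_V hvi) tnth_mktuple j0 hL.
  have -> : mn i v 0 = ww i v by rewrite /mn /ww; case: (0 < l i).
  exact: leq_trans (ww_lt_chi hvi) (chi_i_U i).
Qed.

Lemma main_zero : L = 0 ->
  well_begun_encoding (unionV V) (unionE E) (fun _ => [tuple 0 | _ < L + m]).
Proof.
move=> hL.
have l0 : forall i, l i = 0 by move=> i; apply/eqP; rewrite -leqn0 -hL l_le.
have same : forall u v, u \in unionV V -> v \in unionV V -> u = v.
  move=> u v hu hv; case: (classify hu hv) => [[i [hu' hv']]|[i [j [ij hu' hv' ug vg]]]].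
    exact: l_zero (l0 i) hu' hv'.
  by case/eqP: ug; exact: l_zero (l0 i) hu' (g_in ij).
split; [split|].
- by move=> u v hu hv _; apply: same.
- by move=> u v hu hv; rewrite (same u v hu hv) eqxx.
- by move=> v hv j _; rewrite tnth_mktuple; exact: chromatic_gt0 v.
Qed.

Lemma main_result : exists psi : T -> (L + m).-tuple nat,
  well_begun_encoding (unionV V) (unionE E) psi.
Proof.
case: (posnP L) => hL; last by exists psi; apply: main_pos.
by eexists; apply: main_zero.
Qed.

End Main.

Theorem lemma2 (T : finType) (k : nat) (hk : 1 <= k)
  (V : 'I_k -> {set T}) (E : 'I_k -> rel T) (l : 'I_k -> nat)
  (phi : forall i : 'I_k, T -> (l i).-tuple nat) :
  (forall i, simple_graph (V i) (E i)) ->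
  (forall i, bipartite (V i) (E i)) ->
  (exists g : T, forall i j : 'I_k, i != j -> V i :&: V j = [set g]) ->
  (forall i, well_begun_encoding (V i) (E i) (phi i)) ->
  exists psi : T -> (\max_(i < k) l i + up_log 2 k).-tuple nat,
    well_begun_encoding (unionV V) (unionE E) psi.
Proof.
move=> hs hb [g hg] hw.
exact: (@main_result T k hk V E l phi g hs hb hg hw).
Qed.
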